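(* Let $\varepsilon>0$ and let $\lambda:[0,\infty)\to[0,\infty)$ be a BS density function. For a 1-D SCS with BS density function $\nu$, denote by $\left.\frac{C}{I}\right|_{\nu(r)}$ the random variable $\frac{R_1^{-\varepsilon}}{\sum_{i=2}^\infty R_i^{-\varepsilon}}$, where $R_1\le R_2\le\cdots$ are the ordered points of a Poisson point process on $[0,\infty)$ with intensity $\nu$. Then for every $a>0$, $$\left.\frac{C}{I}\right|_{\lambda(r)}=_{\mathrm{st}}\left.\frac{C}{I}\right|_{\frac1a\lambda(\frac ra)},$$ i.e. the two random variables have the same distribution.
   Context: A 1-D shotgun cellular system (SCS) with BS density function $\lambda(r)$ is a Poisson point process on $[0,\infty)$ with intensity $\lambda$, whose points are distances of base stations from a mobile station at the origin; all BSs have unit transmission power and unit shadow fading, path loss is $R^{-\varepsilon}$, and the mobile is served by the nearest BS, so the carrier-to-interference ratio is $\frac{C}{I}=\frac{R_1^{-\varepsilon}}{\sum_{i\ge2}R_i^{-\varepsilon}}$. For random variables $X,Y$, $X=_{\mathrm{st}}Y$ means $\mathbb P(X>x)=\mathbb P(Y>x)$ for all real $x$. *)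

(* Defs.v *)
From HB Require Import structures.
From mathcomp Require Import all_boot all_order all_algebra.
From mathcomp Require Import all_classical all_reals all_analysis.
Set Implicit Arguments. Unset Strict Implicit. Unset Printing Implicit Defensive.
Import Order.TTheory GRing.Theory Num.Theory.
Local Open Scope classical_set_scope.
Local Open Scope ring_scope.

Section SCS.
Context {R : realType}.

Definition num_points_eq {T : Type} (Rs : nat -> T -> R) (A : set R) (w : T)
  (k : nat) : Prop :=
  exists s : seq nat, [/\ uniq s, size s = k & forall i, A (Rs i w) <-> i \in s].

Definition poisson_pmf (m : R) (k : nat) : R :=
  expR (- m) * m ^+ k / (k`!)%:R.

Definition intensity_mass (lam : R -> R) (A : set R) : R :=
  fine (\int[lebesgue_measure]_(x in A) (lam x)%:E)%E.

(* Rs 0 <= Rs 1 <= ... are the ordered points of a Poisson point process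
   on [0, oo) with intensity lam, defined on the probability space P:
   counts in disjoint bounded Borel subsets of [0,oo) are independent
   Poisson variables with means int_A lam. *)
Definition is_PPP {d} {T : measurableType d} (P : probability T R)
  (lam : R -> R) (Rs : nat -> T -> R) : Prop :=
  [/\ (forall i, measurable_fun setT (Rs i)),
      (forall w, 0 <= Rs 0%N w),
      (forall i w, Rs i w <= Rs i.+1 w) &
      forall (n : nat) (A : 'I_n -> set R) (k : 'I_n -> nat),
        (forall j, measurable (A j)) ->
        (forall j, exists M : R, A j `<=` `[0, M]) ->
        (forall j j', j != j' -> A j `&` A j' = set0) ->
        P (\bigcap_(j in [set: 'I_n]) [set w | num_points_eq Rs (A j) w (k j)])
        = (\prod_(j < n) poisson_pmf (intensity_mass lam (A j)) (k j))%:E].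

(* C/I = R_1^{-eps} / sum_{i>=2} R_i^{-eps}  (indices shifted to start at 0),
   as an extended real (interference may be infinite). *)
Definition CI_ratio {T : Type} (eps : R) (Rs : nat -> T -> R) (w : T) : \bar R :=
  (((Rs 0%N w) `^ (- eps))%:E *
   (\sum_(1 <= i <oo) ((Rs i w) `^ (- eps))%:E)^-1)%E.

End SCS.

(* Main.v *)
Require Import Defs.
From HB Require Import structures.
From mathcomp Require Import all_boot all_order all_algebra.
From mathcomp Require Import all_classical all_reals all_analysis.
From mathcomp Require Import measurable_realfun.
Import Order.TTheory GRing.Theory Num.Theory.
Local Open Scope classical_set_scope.
Local Open Scope ring_scope.
Set Implicit Arguments. Unset Strict Implicit. Unset Printing Implicit Defensive.

Section Comb.
Variable R : realType.
Implicit Types (y : nat -> R) (A B : set R).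

Definition npe y A (k : nat) : Prop :=
  exists s : seq nat, [/\ uniq s, size s = k & forall i, A (y i) <-> i \in s].

Lemma npe_uniq y A k k' : npe y A k -> npe y A k' -> k = k'.
Proof.
move=> [s [us <- hs]] [s' [us' <- hs']].
apply: perm_size; apply: uniq_perm => // i.
by apply/idP/idP => H; [apply/(hs' i).1/(hs i).2 | apply/(hs i).1/(hs' i).2].
Qed.

Lemma npe_sub y A B k : npe y A k -> B `<=` A -> exists2 k', (k' <= k)%N & npe y B k'.
Proof.
move=> [s [us <- hs]] BA.
exists (size (seq.filter (fun i => `[< B (y i) >]) s)); first by rewrite size_filter count_size.
exists (seq.filter (fun i => `[< B (y i) >]) s); split => //; first exact: filter_uniq.
move=> i; rewrite mem_filter; split.
  by move=> Bi; apply/andP; split; [apply/asboolP|apply/(hs i).1/BA].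
by case/andP => /asboolP.
Qed.

Lemma npe0 y : npe y set0 0.
Proof. by exists [::]; split => // i; split. Qed.

Lemma npeU y A B k k' : A `&` B = set0 -> npe y A k -> npe y B k' ->
  npe y (A `|` B) (k + k').
Proof.
move=> AB [s [us <- hs]] [s' [us' <- hs']].
exists (s ++ s'); split.
- rewrite cat_uniq us us' /= andbT; apply/hasPn => i /(hs' i).2 Bi; apply/negP => /(hs i).2 Ai.
  by have : (A `&` B) (y i) by []; rewrite AB.
- by rewrite size_cat.
- move=> i; rewrite mem_cat; split.
    by case=> [/(hs i).1->|/(hs' i).1->]; rewrite ?orbT.
  by case/orP => [/(hs i).2|/(hs' i).2]; [left|right].
Qed.

Lemma npe_bigU (F : eqType) (r : seq F) (Bs : F -> set R) (c : F -> nat) y :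
  uniq r -> (forall b b', b != b' -> Bs b `&` Bs b' = set0) ->
  (forall b, b \in r -> npe y (Bs b) (c b)) ->
  npe y [set z | exists2 b, b \in r & Bs b z] (\sum_(b <- r) c b)%N.
Proof.
elim: r => [|x r IH] /= ur disj hn.
  rewrite big_nil; suff -> : [set z | exists2 b, b \in [::] & Bs b z] = set0 by apply: npe0.
  by apply/seteqP; split => z // [].
move/andP: ur => [xr ur].
rewrite big_cons.
have -> : [set z | exists2 b, b \in x :: r & Bs b z] =
   Bs x `|` [set z | exists2 b, b \in r & Bs b z].
  apply/seteqP; split => z /=.
    by move=> [b]; rewrite inE => /orP[/eqP->|br Bz]; [left|right; exists b].
  by case=> [Bz|[b br Bz]]; [exists x; rewrite ?inE ?eqxx|exists b; rewrite ?inE ?br ?orbT].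
apply: npeU; last 2 first.
- by apply: hn; rewrite inE eqxx.
- by apply: IH => // b br; apply: hn; rewrite inE br orbT.
apply/seteqP; split => z // [Bxz [b br Bbz]].
have xb : x != b by apply: contraNneq xr => ->.
by have : (Bs x `&` Bs b) z by []; rewrite disj.
Qed.

End Comb.

Section Sorted.
Variable R : realType.
Implicit Types (y : nat -> R) (A B : set R).

Definition sortedR y := 0 <= y 0%N /\ forall i, y i <= y i.+1.

Lemma sorted_le y : sortedR y -> forall i j, (i <= j)%N -> y i <= y j.
Proof.
move=> [_ h] i j /subnK <-; elim: (j - i)%N => [|k IH]; rewrite ?add0n //.
by apply: le_trans IH _; rewrite addSn; exact: h.
Qed.

Lemma sorted_ge0 y : sortedR y -> forall i, 0 <= y i.
Proof. by move=> sy i; apply: le_trans (sorted_le sy (leq0n i)); case: sy. Qed.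

Lemma gt_npe y (t : R) i : sortedR y ->
  t < y i <-> exists2 k, (k <= i)%N & npe y `[0, t]%classic k.
Proof.
move=> sy; split.
  move=> tyi; exists (size (seq.filter (fun j => y j <= t) (iota 0 i))).
    by rewrite size_filter (leq_trans (count_size _ _)) // size_iota.
  exists (seq.filter (fun j => y j <= t) (iota 0 i)); split => //.
    by rewrite filter_uniq // iota_uniq.
  move=> j; rewrite mem_filter mem_iota /= add0n in_itv /= sorted_ge0 //=.
  split => [yjt|/andP[]//]; rewrite yjt /=.
  rewrite ltnNge; apply/negP => ij.
  by have := lt_le_trans tyi (sorted_le sy ij); rewrite ltNge yjt.
move=> [k ki [s [us sk hs]]]; rewrite ltNge; apply/negP => yit.
have : (i.+1 <= size s)%N.
  rewrite -(size_iota 0 i.+1); apply: uniq_leq_size; first exact: iota_uniq.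
  move=> j; rewrite mem_iota add0n /= => ji; apply/(hs j).1 => /=.
  by rewrite in_itv /= sorted_ge0 //= (le_trans _ yit) // sorted_le.
by rewrite sk ltnNge ki.
Qed.

End Sorted.

Section Atoms.
Variable R : realType.

Definition atom (m : nat) (t : 'I_m -> R) (b : {ffun 'I_m -> bool}) : set R :=
  [set r | [exists l, b l] && [forall l, b l == (r \in `[0, t l])]].

Definition Kb m (ii : 'I_m -> nat) := (\sum_(l < m) ii l)%N.

Definition valid m (ii : 'I_m -> nat) (u : {ffun {ffun 'I_m -> bool} -> 'I_(Kb ii).+1}) :=
  [forall l, (\sum_(b <- enum {ffun 'I_m -> bool} | b l) (u b : nat) <= ii l)%N].

Arguments valid {m} ii u.
Variables (m : nat) (t : 'I_m -> R).

Lemma atom_disj (b b' : {ffun 'I_m -> bool}) : b != b' -> atom t b `&` atom t b' = set0.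
Proof.
move=> bb'; apply/seteqP; split => r // [/andP[_ /forallP h] /andP[_ /forallP h']].
suff bb : b = b' by rewrite bb eqxx in bb'.
by apply/ffunP => l; rewrite (eqP (h l)) (eqP (h' l)).
Qed.

Lemma I0_atoms l : `[0, t l]%classic =
  [set z : R | exists2 b : {ffun 'I_m -> bool}, b \in seq.filter (fun b : {ffun 'I_m -> bool} => b l) (enum {ffun 'I_m -> bool}) & atom t b z].
Proof.
apply/seteqP; split => z /=.
  move=> zl; exists [ffun l' => z \in `[0, t l']]; first by rewrite mem_filter ffunE zl mem_enum.
  rewrite /atom /=; apply/andP; split; first by apply/existsP; exists l; rewrite ffunE.
  by apply/forallP => l'; rewrite ffunE.
move=> [b]; rewrite mem_filter => /andP[bl _] /andP[_ /forallP /(_ l)].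
by rewrite bl eq_sym => /eqP.
Qed.

Lemma atom_sub (b : {ffun 'I_m -> bool}) l : b l -> atom t b `<=` `[0, t l]%classic.
Proof. by move=> bl r /andP[_ /forallP /(_ l)]; rewrite bl eq_sym => /eqP. Qed.

Lemma atom0 (b : {ffun 'I_m -> bool}) : ~~ [exists l, b l] -> atom t b = set0.
Proof. by move=> /negbTE nb; apply/seteqP; split => r //; rewrite /atom /= nb. Qed.

Variable ii : 'I_m -> nat.

Lemma npe_I0 y l (u : {ffun 'I_m -> bool} -> nat) :
  (forall b, npe y (atom t b) (u b)) ->
  npe y `[0, t l]%classic (\sum_(b <- enum {ffun 'I_m -> bool} | b l) u b)%N.
Proof.
move=> h; rewrite I0_atoms -big_filter; apply: npe_bigU => //.
- by rewrite filter_uniq // enum_uniq.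
- exact: atom_disj.
Qed.

Lemma decomp y : sortedR y ->
  (forall l, t l < y (ii l)) <->
  exists u, valid ii u /\ forall b, npe y (atom t b) (u b).
Proof.
move=> sy; split; last first.
  move=> [u [/forallP vu hu]] l; apply/(gt_npe _ _ sy).
  exists (\sum_(b <- enum {ffun 'I_m -> bool} | b l) u b)%N; first exact: vu.
  by apply: npe_I0 => b; apply: hu.
move=> hl.
have hk l : exists2 k, (k <= ii l)%N & npe y `[0, t l]%classic k.
  exact/(gt_npe _ _ sy).
have hc b : exists c, (c <= Kb ii)%N /\ npe y (atom t b) c.
  have [/existsP[l bl]|nb] := boolP [exists l, b l]; last first.
    by exists 0%N; rewrite atom0 //; split => //; exact: npe0.
  have [k kl nk] := hk l.
  have [c ck nc] := npe_sub nk (atom_sub bl).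
  exists c; split => //; apply: leq_trans ck _; apply: leq_trans kl _.
  by rewrite /Kb (bigD1 l) //= leq_addr.
have [c hc'] := choice hc.
exists [ffun b => inord (c b)].
have cE b : ([ffun b => inord (c b)] b : 'I_(Kb ii).+1) = c b :> nat.
  by rewrite ffunE inordK // ltnS; case: (hc' b).
split; last by move=> b; rewrite cE; case: (hc' b).
apply/forallP => l; have [k kl nk] := hk l.
have := @npe_I0 y l c (fun b => (hc' b).2).
move/(npe_uniq nk) => kE.
under eq_bigr do rewrite cE; by rewrite -kE.
Qed.

End Atoms.
Arguments valid {m} ii u.

Section Prob.
Variable R : realType.
Variables (d : measure_display) (T : measurableType d) (P : probability T R)
  (lam : R -> R) (Rs : nat -> T -> R).
Hypothesis hP : is_PPP P lam Rs.

Lemma mRs i A : measurable A -> measurable (Rs i @^-1` A).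
Proof.
case: hP => mR _ _ _ mA; rewrite -(setTI (Rs i @^-1` A)); exact: mR.
Qed.

Lemma sorted_Rs w : sortedR (fun i => Rs i w).
Proof. by case: hP => _ h0 h1 _; split. Qed.

Lemma mnpe A k : measurable A -> measurable [set w | npe (fun i => Rs i w) A k].
Proof.
move=> mA.
have -> : [set w | npe (fun i => Rs i w) A k] = \bigcup_(s : seq nat)
    (if uniq s && (size s == k) then
      \bigcap_i (if i \in s then Rs i @^-1` A else ~` (Rs i @^-1` A)) else set0).
  apply/seteqP; split => w /=.
    move=> [s [us sk hs]]; exists s => //; rewrite us sk eqxx /= => i _.
    by case: ifPn => [/(hs i).2|si]//= /(hs i).1; rewrite (negbTE si).
  move=> [s _]; case: ifPn => // /andP[us /eqP sk] h; exists s; split => // i.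
  have := h i I; case: ifPn => si /=; first by split.
  by split => // Ai; exfalso; apply: h i I.
apply: countable_bigcupT_measurable; first exact: countableP.
move=> s; case: ifPn => // _; apply: bigcapT_measurable => i.
by case: ifPn => _; [|apply: measurableC]; exact: mRs.
Qed.

Lemma matom m (t : 'I_m -> R) b : measurable (atom t b).
Proof.
have [eb|nb] := boolP [exists l, b l]; last by rewrite atom0.
have -> : atom t b = \bigcap_(l in [set: 'I_m])
   (if b l then `[0, t l]%classic else ~` `[0, t l]%classic).
  apply/seteqP; split => r /=.
    move=> /andP[_ /forallP h] l _; move/eqP: (h l) => ->.
    by case: ifPn => //= /negP.
  move=> h; rewrite /atom /= eb /=; apply/forallP => l; have := h l I.
  by case: (b l) => /= H; [rewrite H|apply/eqP/esym/negP].
apply: fin_bigcap_measurable; first exact: finite_finset.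
by move=> l _; case: ifPn => _; [|apply: measurableC]; exact: measurable_itv.
Qed.

Lemma atom_bnd m (t : 'I_m -> R) b : exists M : R, atom t b `<=` `[0, M]%classic.
Proof.
have [/existsP[l bl]|nb] := boolP [exists l, b l]; last first.
  by exists 0; rewrite atom0.
exists (t l); exact: atom_sub.
Qed.

Lemma prob_formula m (ii : 'I_m -> nat) (t : 'I_m -> R) :
  P [set w | forall l, t l < Rs (ii l) w] =
  (\sum_(u \in [set u | valid ii u])
    (\prod_(j < #|{ffun 'I_m -> bool}|)
       Defs.poisson_pmf (intensity_mass lam (atom t (enum_val j))) (u (enum_val j)))%:E)%E.
Proof.
pose cyl (u : {ffun {ffun 'I_m -> bool} -> 'I_(Kb ii).+1}) :=
  [set w | forall b, npe (fun i => Rs i w) (atom t b) (u b)].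
have -> : [set w | forall l, t l < Rs (ii l) w] = \bigcup_(u in [set u | valid ii u]) cyl u.
  apply/seteqP; split => w /=.
    by move/(decomp t ii (sorted_Rs w)) => [u [vu hu]]; exists u.
  by move=> [u vu hu]; apply/(decomp t ii (sorted_Rs w)); exists u.
rewrite measure_fin_bigcup //; last first.
- move=> u _; rewrite /cyl.
  have -> : [set w | forall b, npe (fun i => Rs i w) (atom t b) (u b)] =
     \bigcap_(b in [set: {ffun 'I_m -> bool}]) [set w | npe (fun i => Rs i w) (atom t b) (u b)].
    by apply/seteqP; split => w /= h b; [move=> _; apply: h|apply: h].
  apply: fin_bigcap_measurable; first exact: finite_finset.
  by move=> b _; apply: mnpe; apply: matom.
- move=> u u' _ _ [w [hu hu']]; apply/ffunP => b; apply/val_inj.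
  exact: npe_uniq (hu b) (hu' b).
- exact: finite_finset.
apply: eq_fsbigr => u _.
case: hP => _ _ _ hpp.
rewrite -hpp.
- congr (P _); apply/seteqP; split => w /=.
    by move=> h j _; apply: h.
  by move=> h b; rewrite -(enum_rankK b); apply: (h _ I).
- by move=> j; apply: matom.
- by move=> j; apply: atom_bnd.
- move=> j j' jj'; apply: atom_disj; apply: contra jj' => /eqP /enum_val_inj ->.
  by rewrite eqxx.
Qed.

Lemma meas_event m (ii : 'I_m -> nat) (t : 'I_m -> R) :
  measurable [set w | forall l, t l < Rs (ii l) w].
Proof.
have -> : [set w | forall l, t l < Rs (ii l) w] =
   \bigcap_(l in [set: 'I_m]) (Rs (ii l) @^-1` `]t l, +oo[%classic).
  apply/seteqP; split => w /= h l.
    by move=> _ /=; rewrite in_itv /= andbT; apply: h.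
  by have := h l I; rewrite /= in_itv /= andbT.
apply: fin_bigcap_measurable; first exact: finite_finset.
by move=> l _; apply: mRs; exact: measurable_itv.
Qed.

End Prob.

Section CV.
Variable R : realType.
Variables (a : R) (ha : 0 < a).
Local Notation mu := (@lebesgue_measure R).

Let phi (r : measurableTypeR R) : measurableTypeR R := r / a.
Let mphi : measurable_fun setT phi.
Proof. exact: measurable_realfun.mulrr_measurable. Qed.

Lemma pf_scale A : measurable A -> pushforward mu phi A = (a%:E * mu A)%E.
Proof.
move=> mA.
have ha' : 0 <= a^-1 by rewrite invr_ge0 ltW.
pose pf := measure_function_pushforward__canonical__measure_function_Measure mu mphi.
have := @lebesgue_measure_unique R (mscale (NngNum ha') pf) _ A mA.
rewrite /mscale /= => ->; last first.
  move=> _ [[x1 x2] _ <-] /=.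
  rewrite /mscale /= /pushforward /=.
  have -> : phi @^-1` `]x1, x2]%classic = `]x1 * a, x2 * a]%classic.
    apply/seteqP; split => r /=; rewrite !in_itv /= /phi.
      by rewrite ltr_pdivlMr // ler_pdivrMr.
    by rewrite ltr_pdivlMr // ler_pdivrMr.
  rewrite !lebesgue_measure_itv /= !lte_fin ltr_pM2r //.
  case: ifPn => _; last by rewrite mule0.
  by rewrite -EFinD -EFinM -mulrBl mulrCA mulVf ?gt_eqF // mulr1.
by rewrite /mscale /= muleA -EFinM divff ?gt_eqF // mul1e.
Qed.

Lemma cv (lam : R -> R) (X : set R) : measurable X ->
  measurable_fun X (fun x => (lam x)%:E) -> (forall x, X x -> 0 <= lam x) ->
  (\int[mu]_(x in [set r : R | X (r / a)%R]) ((a^-1 * lam (x / a))%R%:E) =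
   \int[mu]_(x in X) (lam x)%:E)%E.
Proof.
move=> mX mlam lam0.
have ha' : 0 <= a by rewrite ltW.
have mf : measurable_fun X (fun z => (a^-1 * lam z)%:E).
  under eq_fun do rewrite EFinM.
  by apply: emeasurable_funM => //; exact: measurable_cst.
transitivity (\int[measure_function_pushforward__canonical__measure_function_Measure mu mphi]_(z in X)
   (a^-1 * lam z)%:E)%E.
  rewrite (ge0_integral_pushforward mphi) //.
  by move=> z /[!inE] Xz; rewrite lee_fin mulr_ge0 // ?invr_ge0 // lam0.
rewrite (eq_measure_integral (mscale (NngNum ha') mu)); last first.
  by move=> B mB _; rewrite /= pf_scale.
rewrite ge0_integral_mscale //; last first.
  by move=> z Xz; rewrite lee_fin mulr_ge0 ?invr_ge0 ?(ltW ha) //; apply: lam0.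
rewrite (@eq_integral _ _ _ mu X (fun x => (a^-1)%:E * (lam x)%:E)%E); last first.
  by move=> z _; rewrite EFinM.
rewrite ge0_integralZl //.
- by rewrite /= muleA -EFinM divff ?gt_eqF // mul1e.
all: try by move=> z Xz; rewrite lee_fin lam0.
all: by rewrite lee_fin invr_ge0 ltW.
Qed.
End CV.


Section Mass.
Variable R : realType.
Variables (a : R) (ha : 0 < a) (lam : R -> R)
  (lam_ge0 : forall r : R, 0 <= r -> 0 <= lam r)
  (lam_loc : forall r : R, 0 <= r ->
     lebesgue_measure.-integrable `[0, r] (fun x => (lam x)%:E)).

Lemma atom_scale m (t : 'I_m -> R) b :
  atom (fun l => a * t l) b = [set r | atom t b (r / a)].
Proof.
have H r l : (r \in `[0, a * t l]) = ((r / a) \in `[0, t l]).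
  by rewrite !in_itv /= ler_pdivlMr // mul0r ler_pdivrMr // mulrC.
apply/seteqP; split => r /andP[e /forallP h]; apply/andP; split => //;
  apply/forallP => l; [rewrite -H|rewrite H]; exact: h l.
Qed.

Lemma mass_scale m (t : 'I_m -> R) b :
  intensity_mass (fun r => a^-1 * lam (r / a)) (atom (fun l => a * t l) b) =
  intensity_mass lam (atom t b).
Proof.
rewrite /intensity_mass atom_scale cv //.
- exact: matom.
- have [M hM] := atom_bnd t b.
  have M0 : 0 <= Num.max 0 M by rewrite le_max lexx.
  have mlam := measurable_int _ (lam_loc M0).
  have sub : atom t b `<=` `[0, Num.max 0 M]%classic.
    move=> r /hM; rewrite /= !in_itv /= => /andP[-> rM] /=.
    by rewrite le_max rM orbT.
  exact: (measurable_funS (measurable_itv _) sub mlam).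
- have [M hM] := atom_bnd t b.
  move=> x /hM.
  by rewrite /= in_itv /= => /andP[x0 _]; apply: lam_ge0.
Qed.

End Mass.

Section Inv.
Variable R : realType.
Local Open Scope ereal_scope.

Lemma inv_pre (r : R) (x : \bar R) : 0 <= x ->
  (x^-1 \in `]r%:E, +oo[) = (if (r < 0)%R then true else x < r%:E^-1).
Proof.
move=> x0; rewrite in_itv /= andbT.
case: ifPn => r0.
  have xi : 0 <= x^-1 by rewrite inve_ge0.
  by apply/idP; apply: lt_le_trans xi; rewrite lte_fin.
by rewrite inve_pgt // inE lee_fin leNgt.
Qed.

Lemma mset_ge (c : \bar R) : measurable [set x : \bar R | c <= x].
Proof. by rewrite -[X in measurable X]setTI; apply: emeasurable_fun_c_infty. Qed.
Lemma mset_lt (c : \bar R) : measurable [set x : \bar R | x < c].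
Proof. by rewrite -[X in measurable X]setTI; apply: emeasurable_fun_infty_o. Qed.
Lemma mset_neq (c : \bar R) : measurable [set x : \bar R | x != c].
Proof. by rewrite -[X in measurable X]setTI; apply: emeasurable_neq. Qed.

Lemma minv_nn : measurable_fun [set x : \bar R | 0 <= x] (fun x => x^-1).
Proof.
apply: (measurability _ (ErealGenOInfty.measurableE R)) => _ [_ [r ->] <-].
have -> : [set x : \bar R | 0 <= x] `&` (fun x => x^-1) @^-1` `]r%:E, +oo[%classic =
  [set x | 0 <= x] `&`
     (if (r < 0)%R then setT else [set x | x < (r%:E)^-1]).
  apply/seteqP; split => x /= [x0 h]; move: h; rewrite /= ?inv_pre //.
    by move=> h; split => //; case: ifPn h => //.
  by move=> h; split => //; case: ifPn h.
apply: measurableI; first exact: mset_ge.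
by case: ifPn => _; [exact: measurableT|exact: mset_lt].
Qed.

End Inv.

Definition seqR (R : realType) := nat -> R.
HB.instance Definition _ (R : realType) := gen_eqMixin (seqR R).
HB.instance Definition _ (R : realType) := gen_choiceMixin (seqR R).
HB.instance Definition _ (R : realType) := isPointed.Build (seqR R) (fun _ => 0).

Section Seq.
Variable R : realType.
Definition cylP : set (set (seqR R)) :=
  [set E | exists s : seq (nat * R), E = [set y : seqR R | forall p, p \in s -> p.2 < y p.1]].
Local Notation Gs := (g_sigma_algebraType cylP).

Lemma cylP_setI : setI_closed cylP.
Proof.
move=> _ _ [s ->] [s' ->]; exists (s ++ s'); apply/seteqP; split => y /=.
  by move=> [h h'] p; rewrite mem_cat => /orP[/h|/h'].
by move=> h; split => p ps; apply: h; rewrite mem_cat ps ?orbT.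
Qed.

Lemma mcoord i : measurable_fun (setT : set Gs) (fun y : Gs => y i : R).
Proof.
apply: (measurability _ (RGenOInfty.measurableE R)) => _ [_ [r ->] <-].
apply: sub_sigma_algebra; exists [:: (i, r)]; apply/seteqP; split => y /=.
  by move=> [_]; rewrite in_itv /= andbT => ri p; rewrite inE => /eqP ->.
by move=> h; split => //; rewrite in_itv /= andbT; apply: (h (i, r)); rewrite inE.
Qed.

Lemma mT0 (eps x : R) :
  measurable [set y : Gs | (x%:E < CI_ratio eps (fun i (y : seqR R) => y i) y)%E].
Proof.
have mu0 : measurable_fun setT (fun y : Gs => ((y 0%N) `^ (-eps))%:E).
  by apply/measurable_EFinP; exact: measurableT_comp (measurable_powR _) (mcoord 0).
have mS : measurable_fun setT (fun y : Gs => (\sum_(1 <= i <oo) ((y i) `^ (-eps))%:E)%E).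
  have -> : (fun y : Gs => (\sum_(1 <= i <oo) ((y i) `^ (-eps))%:E)%E) =
     (fun y : Gs => (\sum_(i <oo | i \in [pred i : nat | (1 <= i)%N]) ((y i) `^ (-eps))%:E)%E).
    by apply/funext => y; rewrite eseries_cond.
  apply: ge0_emeasurable_sum => [k y _ _|k _]; first by rewrite lee_fin powR_ge0.
  by apply/measurable_EFinP; exact: measurableT_comp (measurable_powR _) (mcoord k).
have mSi : measurable_fun setT
    (fun y : Gs => ((\sum_(1 <= i <oo) ((y i) `^ (-eps))%:E)^-1)%E).
  apply: (measurable_comp (F := [set x : \bar R | (0 <= x)%E])).
  - exact: mset_ge.
  - by move=> _ [y _ <-]; apply: nneseries_ge0 => n _ _; rewrite lee_fin powR_ge0.
  - exact: minv_nn.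
  - exact: mS.
have mf := emeasurable_funM mu0 mSi.
have := emeasurable_fun_o_infty measurableT mf x%:E.
by rewrite setTI.
Qed.

End Seq.

Section Scale.
Variable R : realType.

Lemma CI_scale (T : Type) (eps c : R) (c0 : 0 < c) (Rs : nat -> T -> R) w
  (h : forall i, 0 <= Rs i w) :
  CI_ratio eps (fun i (y : seqR R) => y i) (fun i => c * Rs i w) = CI_ratio eps Rs w.
Proof.
rewrite /CI_ratio.
have k0 : 0 < c `^ (-eps) by apply: powR_gt0.
under eq_eseriesr => i _ do rewrite powRM ?(ltW c0) // EFinM.
rewrite nneseriesZl; last by move=> i _; rewrite lee_fin powR_ge0.
rewrite powRM ?(ltW c0) //.
have : (0 <= \sum_(1 <= i <oo) ((Rs i w) `^ (-eps))%:E)%E.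
  by apply: nneseries_ge0 => i _ _; rewrite lee_fin powR_ge0.
move: (\sum_(1 <= i <oo) ((Rs i w) `^ (-eps))%:E)%E => S.
have u0 := powR_ge0 (Rs 0%N w) (- eps).
move: (Rs 0%N w `^ (- eps)) u0 => u u0.
move: (c `^ (- eps)) k0 => k k0.
case: S => [r| |] r0.
- rewrite -EFinM !inver mulf_eq0 (gt_eqF k0) orFb.
  case: ifPn => r00.
    by rewrite mulry [RHS]mulry sgrM gtr0_sg // mul1r.
  rewrite -!EFinM; congr EFin.
  by rewrite invfM mulrACA mulfV ?gt_eqF // mul1r.
- by rewrite mulry gtr0_sg // mul1e invey !mule0.
- by [].
Qed.

End Scale.

Lemma seq_ord (R : realType) (f : nat -> R) (s : seq (nat * R)) :
  (forall p, p \in s -> p.2 < f p.1) <->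
  forall l : 'I_(size s), (nth (0%N, 0) s l).2 < f (nth (0%N, 0) s l).1.
Proof.
split => h.
  by move=> l; apply: h; rewrite mem_nth.
move=> p /(nthP (0%N, 0)) [i ilt <-]; exact: (h (Ordinal ilt)).
Qed.

Unset Implicit Arguments.
Set Strict Implicit.

Theorem corollary1 (R : realType) (eps : R) (lam : R -> R)
  (heps : 0 < eps)
  (lam_ge0 : forall r : R, 0 <= r -> 0 <= lam r)
  (lam_loc : forall r : R, 0 <= r ->
     lebesgue_measure.-integrable `[0, r] (fun x => (lam x)%:E))
  (a : R) (ha : 0 < a)
  (d1 : measure_display) (T1 : measurableType d1) (P1 : probability T1 R)
  (R1 : nat -> T1 -> R)
  (d2 : measure_display) (T2 : measurableType d2) (P2 : probability T2 R)
  (R2 : nat -> T2 -> R)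
  (hP1 : is_PPP P1 lam R1)
  (hP2 : is_PPP P2 (fun r => a^-1 * lam (r / a)) R2) :
  forall x : R,
    P1 [set w | (x%:E < CI_ratio eps R1 w)%E]
    = P2 [set w | (x%:E < CI_ratio eps R2 w)%E].
Proof.
move=> x.
pose Y1 (w : T1) : seqR R := fun i => R1 i w.
pose Y2 (w : T2) : seqR R := fun i => a^-1 * R2 i w.
pose D := [set E : set (seqR R) | measurable [set w | E (Y1 w)] /\
   measurable [set w | E (Y2 w)] /\ P1 [set w | E (Y1 w)] = P2 [set w | E (Y2 w)]].
have PD : @cylP R `<=` D.
  move=> _ [s ->].
  pose ii (l : 'I_(size s)) := (nth (0%N, 0) s l).1.
  pose t (l : 'I_(size s)) := (nth (0%N, 0) s l).2.
  have e1 : [set w | [set y : seqR R | forall p, p \in s -> p.2 < y p.1] (Y1 w)] =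
      [set w | forall l, t l < R1 (ii l) w].
    by apply/seteqP; split => w /=; rewrite (seq_ord (fun i => R1 i w)).
  have e2 : [set w | [set y : seqR R | forall p, p \in s -> p.2 < y p.1] (Y2 w)] =
      [set w | forall l, (fun l => a * t l) l < R2 (ii l) w].
    apply/seteqP; split => w /=; rewrite (seq_ord (fun i => a^-1 * R2 i w)).
      by move=> h l; rewrite -ltr_pdivlMl //; apply: h.
    by move=> h l; rewrite ltr_pdivlMl //; apply: h.
  rewrite /D /= e1 e2; split; first by apply: (meas_event hP1).
  split; first by apply: (meas_event hP2).
  rewrite (prob_formula hP1) (prob_formula hP2).
  apply: eq_fsbigr => u _; congr (_%:E); apply: eq_bigr => j _.
  by rewrite mass_scale.
have lD : lambda_system setT D.
  split.
  - by move=> A _; exact: subsetT.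
  - rewrite /D /=; split; first exact: measurableT.
    split; first exact: measurableT.
    by rewrite !probability_setT.
  - move=> A B BA [mA1 [mA2 eA]] [mB1 [mB2 eB]].
    split; first exact: measurableD.
    split; first exact: measurableD.
    rewrite /= measureD // ?measureD //; last 2 first.
    + by apply: le_lt_trans (probability_le1 _ mA2) _; rewrite ltey.
    + by apply: le_lt_trans (probability_le1 _ mA1) _; rewrite ltey.
    rewrite !setIidr; last 2 first.
    + by move=> w /BA.
    + by move=> w /BA.
    by congr (_ - _)%E; [exact: eA|exact: eB].
  - move=> F hF DF.
    pose G1 n := [set w | F n (Y1 w)].
    pose G2 n := [set w | F n (Y2 w)].
    have mG1 n : measurable (G1 n) by case: (DF n).
    have mG2 n : measurable (G2 n) by case: (DF n) => _ [].
    have e1 : [set w | (\bigcup_i F i) (Y1 w)] = \bigcup_i G1 i by [].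
    have e2 : [set w | (\bigcup_i F i) (Y2 w)] = \bigcup_i G2 i by [].
    have hom1 : {homo G1 : n m / (n <= m)%N >-> (n <= m)%O}.
      move=> n m nm; have := hF _ _ nm; rewrite !subsetEset => h w.
      exact: h.
    have hom2 : {homo G2 : n m / (n <= m)%N >-> (n <= m)%O}.
      move=> n m nm; have := hF _ _ nm; rewrite !subsetEset => h w.
      exact: h.
    rewrite /D /= e1 e2; split; first exact: bigcupT_measurable.
    split; first exact: bigcupT_measurable.
    have mU1 : measurable (\bigcup_i G1 i) by apply: bigcupT_measurable.
    have mU2 : measurable (\bigcup_i G2 i) by apply: bigcupT_measurable.
    have c1 := @nondecreasing_cvg_mu _ _ _ P1 G1 mG1 mU1 hom1.
    have c2 := @nondecreasing_cvg_mu _ _ _ P2 G2 mG2 mU2 hom2.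
    have e : (P1 \o G1) = (P2 \o G2).
      by apply/funext => n /=; case: (DF n) => _ [].
    rewrite e in c1.
    exact: (cvg_unique _ c1 c2).
have sD := lambda_system_subset (@cylP_setI R) lD PD (fun X _ => @subsetT _ X).
have [_ [_ e]] := sD _ (mT0 eps x).
transitivity (P2 [set w | (x%:E < CI_ratio eps (fun i (y : seqR R) => y i) (Y2 w))%E]).
  exact: e.
congr (P2 _); apply/seteqP; split => w /=; rewrite /Y2 CI_scale //;
  rewrite ?invr_gt0 // => i; exact: sorted_ge0 (sorted_Rs hP2 w) i.
Qed.
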